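(* Run the Unbiased Space Saving sketch with $m$ bins on an i.i.d. stream of items drawn from a discrete distribution with probabilities $p_1 \ge p_2 \ge \cdots$. If $p_1 < 1/m$, then with probability $1$, for all sufficiently large $t$, $0 \le t/m - \hat{N}_{min}(t) \le m(\log t)^2 + m$ and $0 \le \hat{N}_{max}(t) - t/m \le (\log t)^2 + 1$.
   Context: Unbiased Space Saving sketch with $m$ bins: maintain $m$ bins, each an (item, count) pair, counts initialized to $0$. For each new row with item $x_{new}$: if $x_{new}$ is the label of a bin, increment its count by $1$; otherwise choose a bin with the smallest count $\hat{N}_{min}$ (uniformly at random among all bins sharing the smallest count), increment its count by $1$, and with probability $1/(\hat{N}_{min}+1)$ replace its label by $x_{new}$. $\hat{N}_{min}(t)$ and $\hat{N}_{max}(t)$ are the smallest and largest bin counts after $t$ rows. *)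

(* Defs.v *)
From HB Require Import structures.
From mathcomp Require Import all_boot all_order all_algebra.
From mathcomp Require Import all_classical all_reals all_analysis.
Set Implicit Arguments. Unset Strict Implicit. Unset Printing Implicit Defensive.
Import Order.TTheory GRing.Theory Num.Theory.
Local Open Scope classical_set_scope.
Local Open Scope ring_scope.

(* The Unbiased Space Saving sketch as a deterministic function of its  *)
(* random inputs.                                                       *)
(* A state of the sketch with m bins: labels (None = no label yet) and  *)
(* counts.                                                              *)
Record uss_state (m : nat) := USS {
  uss_label : 'I_m -> option nat;
  uss_count : 'I_m -> nat }.

Definition uss_init (m : nat) : uss_state m := USS (fun _ => None) (fun _ => 0%N).

Definition uss_max m (s : uss_state m) : nat := \max_(i < m) uss_count s i.
Definition uss_min m (s : uss_state m) : nat :=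
  \big[minn/uss_max s]_(i < m) uss_count s i.

(* One update with item x.  u in [0,1] selects uniformly among the bins
   sharing the smallest count (the bin number floor(u*k) among the k tied
   bins, listed in increasing order); v in [0,1] is the coin: the label is
   replaced iff v < 1/(Nmin+1), an event of probability 1/(Nmin+1). *)
Definition uss_step {R : realType} m (s : uss_state m) (x : nat) (u v : R)
  : uss_state m :=
  match [pick i | uss_label s i == Some x] with
  | Some b =>
      USS (uss_label s)
          (fun i => if i == b then (uss_count s i).+1 else uss_count s i)
  | None =>
      let nmin := uss_min s in
      let tied := [seq i <- enum 'I_m | uss_count s i == nmin] in
      let k := size tied in
      let j := minn (Num.truncn (u * k%:R)) k.-1 in
      match nth None (map Some tied) j with
      | None => s
      | Some b =>
          USS (fun i => if (i == b) && (v < (nmin.+1%:R)^-1) then Some x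
                        else uss_label s i)
              (fun i => if i == b then (uss_count s i).+1 else uss_count s i)
      end
  end.

(* state after t rows, the n-th row (n = 0,1,...) being item X n with
   auxiliary randomness U n, V n *)
Fixpoint uss_run {R : realType} m (X : nat -> nat) (U V : nat -> R) (t : nat)
  : uss_state m :=
  match t with
  | 0 => uss_init m
  | n.+1 => uss_step (@uss_run R m X U V n) (X n) (U n) (V n)
  end.

Definition mutually_independent {R : realType} {d} {T : measurableType d}
  (P : probability T R) (I : eqType) (Y : I -> T -> R) : Prop :=
  forall (s : seq I) (B : I -> set R), uniq s ->
    (forall k, measurable (B k)) ->
    P (\bigcap_(k in [set k | k \in s]) (Y k @^-1` B k)) =
    (\prod_(k <- s) fine (P (Y k @^-1` B k)))%:E.

(* the combined family (item n, tie-breaker n, coin n), items embedded in R *)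
Definition uss_family {R : realType} {T : Type}
  (X : nat -> T -> nat) (U V : nat -> T -> R) (k : nat * 'I_3) : T -> R :=
  fun w => if val k.2 == 0%N then (X k.1 w)%:R
           else if val k.2 == 1%N then U k.1 w else V k.1 w.
Arguments uss_run {R} m X U V t.

(* Main.v *)
Require Import Defs.
From HB Require Import structures.
From mathcomp Require Import all_boot all_order all_algebra.
From mathcomp Require Import all_classical all_reals all_analysis.
From mathcomp Require Import lra ring.
Import Order.TTheory GRing.Theory Num.Theory.
Import numFieldNormedType.Exports.
Local Open Scope classical_set_scope.
Local Open Scope ring_scope.
Set Implicit Arguments. Unset Strict Implicit. Unset Printing Implicit Defensive.
Lemma big_mem_cons (I : Type) (r : seq I) (op : nat -> nat -> nat) (x : nat) (F : I -> nat) :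
  (forall a b, op a b = a \/ op a b = b) ->
  \big[op/x]_(j <- r) F j \in x :: map F r.
Proof.
move=> hop; elim: r => [|a r IH]; first by rewrite big_nil mem_head.
rewrite big_cons; case: (hop (F a) (\big[op/x]_(j <- r) F j)) => ->.
  by rewrite !inE eqxx orbT.
move: IH; rewrite !inE => /orP[->//|H]; by rewrite H !orbT.
Qed.

Lemma bigmin_le_gen (I : eqType) (r : seq I) (x : nat) (F : I -> nat) i :
  i \in r -> (\big[minn/x]_(j <- r) F j <= F i)%N.
Proof.
elim: r => [//|a r IH]; rewrite inE big_cons => /orP[/eqP->|H].
  exact: geq_minl.
exact: leq_trans (geq_minr _ _) (IH H).
Qed.

Section Det.
Variable m : nat.
Hypothesis m0 : (0 < m)%N.
Implicit Types s : uss_state m.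

Lemma uss_min_le s i : (uss_min s <= uss_count s i)%N.
Proof. by rewrite /uss_min; apply: bigmin_le_gen; rewrite mem_index_enum. Qed.

Lemma uss_max_ge s i : (uss_count s i <= uss_max s)%N.
Proof. by rewrite /uss_max; apply: (leq_bigmax i). Qed.

Lemma exists_ord : exists i0 : 'I_m, true.
Proof. by exists (Ordinal m0). Qed.

Lemma uss_max_attained s : exists i, uss_max s = uss_count s i.
Proof.
have [i0 _] := exists_ord.
have : uss_max s \in 0%N :: map (uss_count s) (index_enum 'I_m).
  apply: big_mem_cons.
  by move=> a b; rewrite /maxn; case: ltnP; [right|left].
rewrite inE => /orP[/eqP H|/mapP[i _ ->]]; last by exists i.
by exists i0; apply/eqP; rewrite eqn_leq uss_max_ge H.
Qed.

Lemma uss_min_attained s : exists i, uss_min s = uss_count s i.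
Proof.
have : uss_min s \in uss_max s :: map (uss_count s) (index_enum 'I_m).
  apply: big_mem_cons.
  by move=> a b; rewrite /minn; case: ltnP; [left|right].
rewrite inE => /orP[/eqP H|/mapP[i _ ->]]; last by exists i.
have [i Hi] := uss_max_attained s; exists i; rewrite H Hi.
done.
Qed.

Definition lab_uniq s := forall i j y, uss_label s i = Some y -> uss_label s j = Some y -> i = j.

Lemma step_spec (R : realType) s x (u v : R) : exists b,
  [/\ (forall i, uss_count (uss_step s x u v) i =
        if i == b then (uss_count s i).+1 else uss_count s i),
      (forall i, i != b -> uss_label (uss_step s x u v) i = uss_label s i) &
      (uss_label s b = Some x /\ uss_label (uss_step s x u v) b = uss_label s b) \/
      [/\ uss_count s b = uss_min s, (forall i, uss_label s i != Some x) &
        (uss_label (uss_step s x u v) b = uss_label s b \/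
         uss_label (uss_step s x u v) b = Some x)]].
Proof.
rewrite /uss_step; case: pickP => [b /eqP Hb|Hn].
  exists b; split => //; by left.
set nmin := uss_min s.
set tied := [seq i <- enum 'I_m | uss_count s i == nmin].
set k := size tied.
set j := minn _ k.-1.
have [i0 Hi0] := uss_min_attained s.
have kpos : (0 < k)%N.
  rewrite /k /tied lt0n size_eq0; apply/eqP => H.
  have : i0 \in [seq i <- enum 'I_m | uss_count s i == nmin].
    by rewrite mem_filter mem_enum andbT /nmin Hi0.
  by rewrite H.
have jk : (j < k)%N by rewrite /j (leq_ltn_trans (geq_minr _ _)) // prednK.
rewrite (nth_map i0) //.
have : nth i0 tied j \in tied by rewrite mem_nth.
set b := nth i0 tied j; rewrite mem_filter => /andP[/eqP Hb _].
exists b; split => //=.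
- by move=> i /negbTE ->.
- right; split => //.
    by move=> i; apply/negP => /eqP H; move: (Hn i); rewrite H eqxx.
  by rewrite eqxx /=; case: ifP; [right|left].
Qed.

End Det.
Section Run.
Variables (R : realType) (m : nat) (x : nat -> nat) (u v : nat -> R).
Hypothesis m0 : (0 < m)%N.
Local Notation st t := (@uss_run R m x u v t).
Local Notation cnt t i := (uss_count (st t) i).
Local Notation lab t i := (uss_label (st t) i).

Lemma run_sum t : (\sum_i cnt t i)%N = t.
Proof.
elim: t => [|t IH] /=; first by rewrite big1.
have [b [Hc _ _]] := step_spec m0 (st t) (x t) (u t) (v t).
under eq_bigr do rewrite Hc.
transitivity (\sum_i cnt t i).+1%N; last by rewrite IH.
rewrite (bigD1 b) //= eqxx (bigD1 b (erefl true)) //= addSn; congr (_.+1); congr (_ + _)%N.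
by apply: eq_bigr => i /negbTE ->.
Qed.

Lemma run_uniq t : lab_uniq (st t).
Proof.
elim: t => [|t IH] /=; first by move=> i j y.
have [b [_ Hl [[Hb Hb']|[_ Hn Hb']]]] := step_spec m0 (st t) (x t) (u t) (v t).
  move=> i j y.
  have E k : uss_label (uss_step (st t) (x t) (u t) (v t)) k = lab t k.
    by case: (eqVneq k b) => [->|/Hl] //.
  rewrite !E; exact: IH.
move=> i j y.
have E k : k != b -> uss_label (uss_step (st t) (x t) (u t) (v t)) k = lab t k by apply: Hl.
case: Hb' => Hb'.
  have E' k : uss_label (uss_step (st t) (x t) (u t) (v t)) k = lab t k.
    by case: (eqVneq k b) => [->|/Hl] //.
  rewrite !E'; exact: IH.
case: (eqVneq i b) => [->|ib]; case: (eqVneq j b) => [->|jb] //.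
- rewrite Hb' (E _ jb) => -[] Hy H; by move: (Hn j); rewrite H Hy eqxx.
- rewrite Hb' (E _ ib) => H [] Hy; by move: (Hn i); rewrite H Hy eqxx.
- rewrite (E _ ib) (E _ jb); exact: IH.
Qed.

Lemma run_origin t i y : lab t i = Some y -> exists n', (n' < t)%N /\ y = x n'.
Proof.
elim: t i y => [|t IH] i y //=.
have [b [_ Hl [[Hb Hb']|[_ Hn Hb']]]] := step_spec m0 (st t) (x t) (u t) (v t).
  case: (eqVneq i b) => [->|/Hl ->]; rewrite ?Hb' => /IH [n' [H1 H2]];
  by exists n'; split => //; rewrite ltnS ltnW.
case: (eqVneq i b) => [->|/Hl ->].
  case: Hb' => ->.
    by move=> /IH [n' [H1 H2]]; exists n'; split => //; rewrite ltnS ltnW.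
  by move=> [<-]; exists t.
by move=> /IH [n' [H1 H2]]; exists n'; split => //; rewrite ltnS ltnW.
Qed.

Lemma step_le1 t b : (cnt t.+1 b <= (cnt t b).+1)%N.
Proof.
have [b' [Hc _ _]] := step_spec m0 (st t) (x t) (u t) (v t).
by rewrite /= Hc; case: ifP.
Qed.

Lemma notmin_step t b : cnt t b != uss_min (st t) ->
  cnt t.+1 b = (cnt t b + (lab t b == Some (x t)))%N /\ lab t.+1 b = lab t b.
Proof.
move=> nb.
have [b' [Hc Hl [[Hb Hb']|[Hm Hn Hb']]]] := step_spec m0 (st t) (x t) (u t) (v t).
  rewrite /= Hc; case: (eqVneq b b') => [->|bb'].
    by rewrite Hb eqxx Hb' addn1.
  rewrite Hl // addnC; case: eqP => // Hx.
  by case/eqP: bb'; apply: (run_uniq Hx Hb).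
have bb' : b != b' by apply: contraNneq nb => ->; rewrite Hm.
rewrite /= Hc (negbTE bb') Hl //.
by move: (Hn b) => /negbTE ->; rewrite addn0.
Qed.

Definition wcnt s t (y : option nat) : nat := (\sum_(s.+1 <= n < t) (Some (x n) == y))%N.

Lemma DM t b : cnt t b = uss_min (st t) \/
  exists s, [/\ (s < t)%N, (cnt t b <= uss_min (st s) + 1 + wcnt s t (lab t b))%N &
     lab t b = lab s.+1 b].
Proof.
elim: t => [|t IH].
  left; have [i Hi] := uss_min_attained m0 (st 0).
  by rewrite Hi.
case: (eqVneq (cnt t b) (uss_min (st t))) => Hm.
  right; exists t; split => //.
  by rewrite /wcnt big_geq // addn0 -Hm addn1 step_le1.
case: IH => [H|[s [st1 H1 H2]]]; first by rewrite H eqxx in Hm.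
right; have [Hc Hl] := notmin_step Hm.
exists s; split.
- by rewrite ltnS ltnW.
- rewrite Hc Hl /wcnt big_nat_recr /=; last by [].
  by rewrite addnA [Some (x t) == _]eq_sym leq_add2r.
- by rewrite Hl.
Qed.

End Run.
Section Final.
Variables (R : realType) (m : nat) (x : nat -> nat) (u v : nat -> R).
Hypothesis m0 : (0 < m)%N.
Local Notation st t := (@uss_run R m x u v t).
Local Notation cnt t i := (uss_count (st t) i).
Local Notation lab t i := (uss_label (st t) i).

Lemma min_mul_le t : (m * uss_min (st t) <= t)%N.
Proof.
rewrite -{2}(run_sum x u v m0 t).
have -> : (m * uss_min (st t))%N = (\sum_(i < m) uss_min (st t))%N.
  by rewrite sum_nat_const card_ord.
by apply: leq_sum => i _; apply: uss_min_le.
Qed.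

Lemma max_mul_ge t : (t <= m * uss_max (st t))%N.
Proof.
rewrite -{1}(run_sum x u v m0 t).
have -> : (m * uss_max (st t))%N = (\sum_(i < m) uss_max (st t))%N.
  by rewrite sum_nat_const card_ord.
by apply: leq_sum => i _; apply: uss_max_ge.
Qed.

Lemma sum_le_minmax t : (t <= uss_min (st t) + (m.-1) * uss_max (st t))%N.
Proof.
have [b Hb] := uss_min_attained m0 (st t).
rewrite -{1}(run_sum x u v m0 t) (bigD1 b) //= Hb leq_add2l.
have -> : (m.-1 * uss_max (st t))%N = (\sum_(i < m | i != b) uss_max (st t))%N.
  rewrite sum_nat_const; congr (_ * _)%N.
  by rewrite cardC1 card_ord.
by apply: leq_sum => i _; apply: uss_max_ge.
Qed.

Lemma wcnt_eq s t y :
  wcnt x s t (Some y) = (\sum_(j < t - s.+1) (x (j + s.+1) == y))%N.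
Proof.
rewrite /wcnt -{1}(add0n s.+1) big_addn big_mkord; apply: eq_bigr => j _.
by congr nat_of_bool; apply/eqP/eqP => [[]|->].
Qed.

Lemma bin_bound t (L : R) : 0 <= L ->
  (forall s n', (s < t)%N -> (n' <= s)%N ->
     ((\sum_(j < t - s.+1) (x (j + s.+1) == x n'))%N%:R : R) * m%:R
       <= (t - s.+1)%:R + L * m%:R) ->
  forall b, (cnt t b)%:R * m%:R <= t%:R + (L + 1) * m%:R.
Proof.
move=> L0 Hw b; have M0 : (0 : R) < m%:R by rewrite ltr0n.
case: (DM x u v m0 t b) => [->|[s [st1 H1 H2]]].
  have := min_mul_le t; rewrite -(ler_nat R) natrM => H.
  have : 0 <= (L + 1) * m%:R by rewrite mulr_ge0 // addr_ge0.
  rewrite mulrC; lra.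
have Hs := min_mul_le s; move: Hs; rewrite -(ler_nat R) natrM => Hs.
have Hw' : ((wcnt x s t (lab t b))%:R : R) * m%:R <= (t - s.+1)%:R + L * m%:R.
  case E: (lab t b) => [y|].
    have [n' [Hn' ->]] := run_origin m0 (etrans (esym H2) E).
    by rewrite wcnt_eq; apply: Hw.
  rewrite /wcnt big1 ?mul0r; last by [].
  by rewrite addr_ge0 // mulr_ge0 // ltW.
move: H1; rewrite -(ler_nat R) !natrD => H1.
move: Hw'; rewrite natrB // => Hw'.
have Hc : ((cnt t b)%:R : R) * m%:R <= ((uss_min (st s))%:R + 1%:R + (wcnt x s t (lab t b))%:R) * m%:R.
  by rewrite (ler_pM2r M0).
move: Hc; rewrite !mulrDl => Hc.
have : s.+1%:R <= (t%:R : R) by rewrite ler_nat.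
rewrite -addn1 natrD; lra.
Qed.

End Final.
Section Final2.
Variables (R : realType) (m : nat) (x : nat -> nat) (u v : nat -> R).
Hypothesis m0 : (0 < m)%N.
Local Notation st t := (@uss_run R m x u v t).

Lemma det_concl t (L : R) : 0 <= L ->
  (forall s n', (s < t)%N -> (n' <= s)%N ->
     ((\sum_(j < t - s.+1) (x (j + s.+1) == x n'))%N%:R : R) * m%:R
       <= (t - s.+1)%:R + L * m%:R) ->
  0 <= (t%:R : R) / m%:R - (uss_min (st t))%:R <= m%:R * L + m%:R /\
  0 <= ((uss_max (st t))%:R : R) - t%:R / m%:R <= L + 1.
Proof.
move=> L0 Hw; have M0 : (0 : R) < m%:R by rewrite ltr0n.
have Hb := @bin_bound R m x u v m0 t L L0 Hw.
have [b Hmax] := uss_max_attained m0 (st t).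
have Hm : ((uss_max (st t))%:R : R) * m%:R <= t%:R + (L + 1) * m%:R by rewrite Hmax.
have H1 := min_mul_le x u v m0 t; move: H1; rewrite -(ler_nat R) natrM => H1.
have H2 := max_mul_ge x u v m0 t; move: H2; rewrite -(ler_nat R) natrM => H2.
have H3 := sum_le_minmax x u v m0 t; move: H3; rewrite -(ler_nat R) natrD natrM => H3.
have Em : (m.-1%:R : R) = m%:R - 1 by rewrite -{2}(prednK m0) -natr1 addrK.
rewrite Em in H3.
set a := (t%:R : R) / m%:R.
have ta : (t%:R : R) = a * m%:R by rewrite /a divfK // gt_eqF.
rewrite ta in Hm H1 H2 H3.
set mx := ((uss_max (st t))%:R : R) in Hm H2 H3 *.
set mn := ((uss_min (st t))%:R : R) in H1 H3 *.
have h1 : mx <= a + L + 1.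
  rewrite -(ler_pM2r M0); lra.
have m1 : (1 : R) <= m%:R by rewrite ler1n.
have h2 : (m%:R - 1) * mx <= (m%:R - 1) * (a + L + 1).
  by rewrite ler_wpM2l // subr_ge0.
have h3 : mn <= a by rewrite -(ler_pM2r M0); lra.
have h4 : a <= mx by rewrite -(ler_pM2r M0); lra.
have h5 : 0 <= L * m%:R by rewrite mulr_ge0 // ltW.
split; apply/andP; split; nra.
Qed.

End Final2.
Section RealLemmas.
Variable R : realType.

Lemma param_z (m : nat) (p0 : R) : (0 < m)%N -> 0 <= p0 -> p0 < m%:R^-1 ->
  exists z : R, 1 < z /\ (1 - p0 + p0 * z) ^+ m <= z.
Proof.
move=> m0 p00 p0m.
have M0 : (0 : R) < m%:R by rewrite ltr0n.
set q := m%:R * p0.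
have q0 : 0 <= q by rewrite mulr_ge0 // ltW.
have q1 : q < 1 by rewrite /q mulrC -ltr_pdivlMr // div1r.
set y := 1 - q.
exists (1 + y); split; first by rewrite /y; lra.
have -> : 1 - p0 + p0 * (1 + y) = 1 + p0 * y by ring.
have e1 : 1 + p0 * y <= expR (p0 * y) by apply: expR_ge1Dx.
have e1' : (1 + p0 * y) ^+ m <= expR (p0 * y) ^+ m.
  apply: lerXn2r => //; rewrite ?inE ?nnegrE.
    by rewrite addr_ge0 // mulr_ge0 // /y; lra.
  by rewrite ltW // expR_gt0.
rewrite -expRM_natl in e1'.
apply: (le_trans e1').
set a := m%:R * (p0 * y).
have ea : a = q * y by rewrite /a /q mulrA.
have e2 : 1 - a <= expR (- a) by have := expR_ge1Dx (- a); lra.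
have e3 : expR a * expR (- a) = 1 by rewrite -expRD subrr expR0.
have e4 : 0 < expR a := expR_gt0 a.
have y0 : 0 <= y by rewrite /y; lra.
have e5 : 1 <= (1 + y) * (1 - a).
  have h : 0 <= (1 - q) * (1 - q) * (1 - q) by rewrite !mulr_ge0 //; lra.
  rewrite ea /y; nra.
have e6 : expR a * 1 <= expR a * ((1 + y) * (1 - a)) by rewrite ler_pM2l.
have e7 : (1 + y) * (1 - a) <= (1 + y) * expR (- a) by rewrite ler_pM2l //; lra.
nra.
Qed.

Lemma K_bound (m n : nat) (p0 z L : R) : (0 < m)%N -> 1 < z ->
  1 <= 1 - p0 + p0 * z -> (1 - p0 + p0 * z) ^+ m <= z ->
  expR (- ((n%:R / m%:R + L) * ln z)) * (1 - p0 + p0 * z) ^+ n <= expR (- (L * ln z)).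
Proof.
move=> m0 z1 Q1 Qm.
have M0 : (0 : R) < m%:R by rewrite ltr0n.
set Q := 1 - p0 + p0 * z in Q1 Qm *.
have Q0 : 0 < Q by lra.
have -> : Q ^+ n = expR (n%:R * ln Q) by rewrite expRM_natl lnK // inE.
rewrite -expRD ler_expR.
have h1 : m%:R * ln Q <= ln z.
  rewrite mulr_natl -lnXn // ler_ln // ?inE ?posrE ?exprn_gt0 //; lra.
have h2 : n%:R * ln Q <= n%:R / m%:R * ln z.
  have -> : n%:R * ln Q = n%:R / m%:R * (m%:R * ln Q).
    by rewrite mulrA divfK // gt_eqF.
  by rewrite ler_wpM2l // divr_ge0.
lra.
Qed.

Lemma binom_tail n (p p0 z th : R) : 0 <= p -> p <= p0 -> p0 <= 1 -> 1 <= z ->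
  \sum_(f : {ffun 'I_n -> bool} | th < (\sum_j (f j : nat))%N%:R)
     \prod_(j < n) (if f j then p else 1 - p)
   <= expR (- (th * ln z)) * (1 - p0 + p0 * z) ^+ n.
Proof.
move=> p0' pp0 p01 z1.
have z0 : 0 < z by lra.
have term (f : {ffun 'I_n -> bool}) : th < (\sum_j (f j : nat))%N%:R ->
    \prod_(j < n) (if f j then p else 1 - p) <=
    expR (- (th * ln z)) * \prod_(j < n) (if f j then p * z else 1 - p).
  move=> hf.
  have -> : \prod_(j < n) (if f j then p * z else 1 - p) =
      z ^+ (\sum_j (f j : nat))%N * \prod_(j < n) (if f j then p else 1 - p).
    rewrite (big_morph (fun k => z ^+ k) (exprD z) (expr0 z)) -big_split /=.
    by apply: eq_bigr => j _; case: (f j); rewrite ?expr1 ?expr0 ?mul1r // mulrC.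
  rewrite mulrA -[X in X <= _]mul1r ler_wpM2r //.
    by rewrite prodr_ge0 // => j _; case: (f j); lra.
  have -> : z ^+ (\sum_j (f j : nat))%N = expR ((\sum_j (f j : nat))%N%:R * ln z).
    by rewrite expRM_natl lnK // posrE.
  rewrite -expRD -[leLHS]expR0 ler_expR.
  have : 0 <= ln z by apply: ln_ge0.
  nra.
apply: (le_trans (ler_sum _ (fun f hf => term f hf))).
rewrite -mulr_sumr; apply: ler_wpM2l; first exact: ltW (expR_gt0 _).
apply: (le_trans (y := \sum_(f : {ffun 'I_n -> bool}) \prod_(j < n) (if f j then p * z else 1 - p))).
  rewrite [X in X <= _]big_mkcond /=; apply: ler_sum => f _.
  case: ifP => _ //; rewrite prodr_ge0 // => j _; case: (f j); nra.
rewrite -(bigA_distr_bigA (fun (j : 'I_n) (b : bool) => if b then p * z else 1 - p)) /=.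
under eq_bigr do rewrite big_bool /=.
rewrite prodr_const card_ord.
apply: lerXn2r; rewrite ?inE ?nnegrE /=; try nra.
Qed.
End RealLemmas.
Section MeasureGen.
Context d (T : measurableType d) (R : realType) (mu : {measure set T -> \bar R}).

Lemma le_mu_bigsetU (I : Type) (r : seq I) (Pr : pred I) (F : I -> set T) :
  (forall i, measurable (F i)) ->
  (mu (\big[setU/set0]_(i <- r | Pr i) F i) <= \sum_(i <- r | Pr i) mu (F i))%E.
Proof.
move=> mF; elim: r => [|a r IH]; first by rewrite !big_nil measure0.
rewrite !big_cons; case: ifP => _ //.
apply: (le_trans (measureU2 mu _ _)) => //; first exact: bigsetU_measurable.
exact: leeD2l.
Qed.

End MeasureGen.

Lemma in_bigsetU (T : Type) (I : eqType) (r : seq I) (Pr : pred I) (F : I -> set T) w i :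
  i \in r -> Pr i -> F i w -> (\big[setU/set0]_(i <- r | Pr i) F i) w.
Proof.
elim: r => [//|a r IH]; rewrite inE big_cons => /orP[/eqP <-|ir] Pi Fi.
  by rewrite Pi; left.
by case: ifP => _; [right|]; apply: IH.
Qed.

Lemma in_bigsetI (T : Type) (I : eqType) (r : seq I) (F : I -> set T) w :
  (\big[setI/setT]_(i <- r) F i) w <-> (forall i, i \in r -> F i w).
Proof.
elim: r => [|a r IH]; first by rewrite big_nil.
rewrite big_cons; split.
  by move=> [Fa /IH H] i; rewrite inE => /orP[/eqP ->|/H].
by move=> H; split; [apply: H; rewrite mem_head|apply/IH => i ir; apply: H; rewrite inE ir orbT].
Qed.

Definition Xeq (T : Type) (X : nat -> T -> nat) n i : set T := [set w | X n w = i].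
Definition exact (T : Type) (X : nat -> T -> nat) s t i (f : {ffun 'I_(t - s.+1) -> bool}) : set T :=
  \big[setI/setT]_(j < t - s.+1)
     (if f j then Xeq X (j + s.+1)%N i else ~` Xeq X (j + s.+1)%N i).
Arguments exact {T} X s t i f.
Arguments Xeq {T} X n i.

Section Prob.
Context (R : realType) d (T : measurableType d) (P : probability T R) (p : nat -> R)
  (X : nat -> T -> nat) (U V : nat -> T -> R).
Hypotheses (mX : forall n i, measurable [set w | X n w = i])
  (PX : forall n i, P [set w | X n w = i] = (p i)%:E)
  (ind : mutually_independent P (uss_family X U V)).

Lemma mexact s t i f : measurable (exact X s t i f).
Proof.
apply: bigsetI_measurable => j _; case: (f j); last apply: measurableC; exact: mX.
Qed.

Lemma pre1 a i : uss_family X U V (a, ord0 : 'I_3) @^-1` [set (i%:R : R)] = Xeq X a i.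
Proof.
apply/seteqP; split => w /=; rewrite /uss_family /Xeq /=.
  by move/eqP; rewrite eqr_nat => /eqP.
by move=> ->.
Qed.

Lemma prob_exact s t n' i (f : {ffun 'I_(t - s.+1) -> bool}) : (n' <= s)%N ->
  P (Xeq X n' i `&` exact X s t i f) =
  (p i * \prod_(j < t - s.+1) (if f j then p i else 1 - p i))%:E.
Proof.
move=> hn'.
set n := (t - s.+1)%N in f *.
pose S : seq (nat * 'I_3) := (n', ord0) :: [seq ((val j + s.+1)%N, ord0) | j <- index_enum 'I_n].
pose B (k : nat * 'I_3) : set R := if (k.1 <= s)%N then [set (i%:R : R)]
  else if [exists j : 'I_n, ((val j + s.+1)%N == k.1) && f j] then [set i%:R]
  else ~` [set i%:R].
have Ex (j : 'I_n) : [exists j' : 'I_n, ((val j' + s.+1)%N == (val j + s.+1)%N) && f j'] = f j.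
  apply/existsP/idP => [[j' /andP[/eqP E fj']]|fj]; last by exists j; rewrite eqxx fj.
  have -> : j = j' by apply: val_inj; move/eqP: E; rewrite eqn_add2r => /eqP.
  exact: fj'.
have lf (j : 'I_n) : ((val j + s.+1)%N <= s)%N = false.
  by apply/negbTE; rewrite -ltnNge addnS ltnS leq_addl.
have uS : uniq S.
  rewrite /S /= map_inj_uniq ?index_enum_uniq ?andbT.
    by apply/mapP => -[j _ [E]]; move: hn'; rewrite E lf.
  by move=> j1 j2 [] /eqP; rewrite eqn_add2r => /eqP /val_inj.
have mB k : measurable (B k).
  rewrite /B; case: ifP => _; [|case: ifP => _]; [| |apply: measurableC];
  exact: measurable_set1.
have := ind uS mB.
have -> : \bigcap_(k in [set k | k \in S]) (uss_family X U V k @^-1` B k) =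
    Xeq X n' i `&` exact X s t i f.
  apply/seteqP; split => w.
    move=> H; split.
      have := H (n', ord0); rewrite /= inE eqxx /= => /(_ isT).
      rewrite /B /= hn' /uss_family /= => /eqP; rewrite eqr_nat => /eqP //.
    apply/in_bigsetI => j _.
    have := H ((val j + s.+1)%N, ord0).
    rewrite /= inE (map_f (fun j : 'I_n => ((val j + s.+1)%N, ord0 : 'I_3))) ?mem_index_enum ?orbT //.
    move=> /(_ isT); rewrite /B /= lf Ex /uss_family /= /Xeq.
    case: (f j) => /=.
      by move/eqP; rewrite eqr_nat => /eqP.
    by move=> H1 H2; apply: H1; rewrite H2.
  move=> [H0 /in_bigsetI H1] [a k] /=; rewrite inE => /orP[/eqP [-> ->]|].
    by rewrite /B /= hn' /uss_family /= H0.
  move=> /mapP [j _ [-> ->]].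
  have := H1 j (mem_index_enum j); rewrite /B /= lf Ex /uss_family /= /Xeq.
  by case: (f j) => /= H2; [rewrite H2|move=> /eqP; rewrite eqr_nat => /eqP].
move=> ->; congr (_ %:E); rewrite big_cons big_map /=; congr (_ * _).
  by rewrite /B /= hn' pre1 /Xeq PX.
apply: eq_bigr => j _; rewrite /B /= lf Ex.
case: (f j).
  by rewrite pre1 /Xeq PX.
rewrite -preimage_setC pre1 probability_setC; last exact: mX.
by rewrite /Xeq PX.
Qed.

End Prob.
Definition Aset (R : realType) (T : Type) (X : nat -> T -> nat) (th : R) s t n' i : set T :=
  \big[setU/set0]_(f : {ffun 'I_(t - s.+1) -> bool} | th < ((\sum_j (f j : nat))%N)%:R)
     (Xeq X n' i `&` exact X s t i f).
Arguments Aset {R T} X th s t n' i.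
Definition Gset (R : realType) (T : Type) (X : nat -> T -> nat) (thr : nat -> nat -> R) s t n' : set T :=
  \bigcup_i Aset X (thr s t) s t n' i.
Arguments Gset {R T} X thr s t n'.
Definition Eset (R : realType) (T : Type) (X : nat -> T -> nat) (thr : nat -> nat -> R) t : set T :=
  \big[setU/set0]_(s < t) \big[setU/set0]_(n' < s.+1) Gset X thr s t n'.
Arguments Eset {R T} X thr t.

Section Prob2.
Context (R : realType) d (T : measurableType d) (P : probability T R) (p : nat -> R)
  (X : nat -> T -> nat) (U V : nat -> T -> R).
Hypotheses (mX : forall n i, measurable [set w | X n w = i])
  (PX : forall n i, P [set w | X n w = i] = (p i)%:E)
  (ind : mutually_independent P (uss_family X U V))
  (p0 : forall i, 0 <= p i) (ps : series p @ \oo --> (1 : R))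
  (pdec : forall i, p i.+1 <= p i) (p01 : p 0%N <= 1).

Lemma p_le0 i : p i <= p 0%N.
Proof. elim: i => [//|i IH]; exact: le_trans (pdec i) IH. Qed.

Lemma mA (th : R) s t n' i : measurable (Aset X th s t n' i).
Proof.
apply: bigsetU_measurable => f _; apply: measurableI; first exact: mX.
exact: mexact.
Qed.

Lemma mG (thr : nat -> nat -> R) s t n' : measurable (Gset X thr s t n').
Proof. by apply: bigcupT_measurable => i; apply: mA. Qed.

Lemma mE (thr : nat -> nat -> R) t : measurable (Eset X thr t).
Proof.
by apply: bigsetU_measurable => s _; apply: bigsetU_measurable => n' _; apply: mG.
Qed.

Lemma PA (z th : R) s t n' i : 1 <= z -> (n' <= s)%N ->
  (P (Aset X th s t n' i) <=
   (p i * (expR (- (th * ln z)) * (1 - p 0%N + p 0%N * z) ^+ (t - s.+1)))%:E)%E.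
Proof.
move=> z1 hn'.
apply: (le_trans (le_mu_bigsetU _ _ _ _)).
  by move=> f; apply: measurableI; [exact: mX|exact: mexact].
rewrite (eq_bigr (fun f : {ffun 'I_(t - s.+1) -> bool} => (p i * \prod_(j < t - s.+1) (if f j then p i else 1 - p i))%:E)); last first.
  by move=> f _; apply: (prob_exact mX PX ind).
rewrite sumEFin lee_fin -mulr_sumr ler_wpM2l //.
apply: binom_tail => //; exact: p_le0.
Qed.

Lemma sum_p_le1 : (\sum_(i <oo) (p i)%:E <= 1)%E.
Proof.
apply: lime_le; first by apply: is_cvg_nneseries => n _ _; rewrite lee_fin.
apply: nearW => n; rewrite sumEFin lee_fin.
have : series p n <= limn (series p).
  apply: nondecreasing_cvgn_le; last by apply/cvg_ex; exists 1.
  move=> a b ab; rewrite /series /=.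
  by rewrite [leRHS](big_cat_nat _ (n := a)) //= lerDl sumr_ge0.
by rewrite (cvg_lim _ ps) //; exact: Rhausdorff.
Qed.

Lemma PG (K : R) (thr : nat -> nat -> R) s t n' : 0 <= K ->
  (forall i, (P (Aset X (thr s t) s t n' i) <= (p i * K)%:E)%E) ->
  (P (Gset X thr s t n') <= K%:E)%E.
Proof.
move=> K0 HA.
apply: (le_trans (@measure_sigma_subadditive _ _ _ P (Gset X thr s t n')
   (fun i => Aset X (thr s t) s t n' i) _ _ _)).
- by move=> i; apply: mA.
- exact: mG.
- by [].
apply: (le_trans (y := (\sum_(i <oo) (K%:E * (p i)%:E))%E)).
  apply: lee_nneseries.
  - by move=> i _ _; apply: measure_ge0.
  - by move=> i _; rewrite -EFinM mulrC; apply: HA.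
rewrite nneseriesZl; last by move=> i _; rewrite lee_fin.
rewrite -[leRHS]mule1; apply: lee_pmul => //.
  by apply: nneseries_ge0 => i _ _; rewrite lee_fin.
exact: sum_p_le1.
Qed.

Lemma PE (K : R) (thr : nat -> nat -> R) t : 0 <= K ->
  (forall s n', (s < t)%N -> (n' <= s)%N -> (P (Gset X thr s t n') <= K%:E)%E) ->
  (P (Eset X thr t) <= (t%:R * (t%:R * K))%:E)%E.
Proof.
move=> K0 HG.
apply: (le_trans (le_mu_bigsetU _ _ _ _)).
  by move=> s; apply: bigsetU_measurable => n' _; apply: mG.
apply: (le_trans (y := \sum_(s < t) (t%:R * K)%:E)%E).
  apply: lee_sum => s _.
  apply: (le_trans (le_mu_bigsetU _ _ _ _)); first by move=> n'; apply: mG.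
  apply: (le_trans (y := \sum_(n' < s.+1) K%:E)%E).
    by apply: lee_sum => n' _; apply: HG => //; rewrite -ltnS.
  rewrite sumEFin lee_fin sumr_const card_ord -[K *+ _]mulr_natl.
  by apply: ler_wpM2r => //; rewrite ler_nat.
by rewrite sumEFin lee_fin sumr_const card_ord -[_ *+ t]mulr_natl.
Qed.

End Prob2.
Section Summ.
Variable R : realType.

Definition gterm (T1 t : nat) : R := if (T1 <= t)%N then t%:R^-1 - t.+1%:R^-1 else 0.

Lemma gterm_ge0 T1 t : (1 <= T1)%N -> 0 <= gterm T1 t.
Proof.
move=> T11; rewrite /gterm; case: ifP => // hT.
have t0 : (0 < t)%N by apply: leq_trans hT.
rewrite subr_ge0 lef_pV2 ?posrE ?ltr0n // ler_nat //.
Qed.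

Lemma tele T1 N : (1 <= T1)%N -> \sum_(t < N) gterm T1 t <= 1.
Proof.
move=> T11.
suff H : forall N, \sum_(t < N.+1) gterm T1 t <= 1 - N.+1%:R^-1.
  case: N => [|N]; first by rewrite big_ord0.
  apply: le_trans (H N) _; rewrite lerBlDr lerDl invr_ge0 //.
elim => [|n IH].
  rewrite big_ord_recr big_ord0 /= /gterm.
  by case: ifP => h; [move: h; rewrite leqn0 => /eqP h; rewrite h in T11|rewrite invr1 subrr add0r].
rewrite big_ord_recr /=.
have d : gterm T1 n.+1 <= n.+1%:R^-1 - n.+2%:R^-1.
  rewrite /gterm; case: ifP => // _.
  by rewrite subr_ge0 lef_pV2 ?posrE ?ltr0n // ler_nat.
apply: (le_trans (lerD IH d)).
by rewrite addrA subrK.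
Qed.

Lemma tail_bound (t : nat) (c : R) : 0 < c -> (2 <= t)%N -> 5 / c <= ln t%:R ->
  t%:R * (t%:R * expR (- ((ln (t%:R : R)) ^+ 2 * c))) <= t%:R^-1 - t.+1%:R^-1.
Proof.
move=> c0 t2 hl.
set a : R := t%:R.
have a2 : 2 <= a by rewrite /a (ler_nat R 2).
have a0 : 0 < a by lra.
set l := ln a.
have l0 : 0 < l by apply: ln_gt0; lra.
have h5 : 5 <= l * c by rewrite -ler_pdivrMr.
have e1 : expR (- (l ^+ 2 * c)) <= expR (- (5%:R * l)).
  rewrite ler_expR lerN2; nra.
have e2 : expR (- (5%:R * l)) = (a ^+ 5)^-1.
  by rewrite expRN expRM_natl lnK // posrE.
rewrite e2 in e1.
apply: (le_trans (y := a * (a * (a ^+ 5)^-1))).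
  by apply: ler_wpM2l; [lra|apply: ler_wpM2l; [lra|]].
have -> : a * (a * (a ^+ 5)^-1) = (a ^+ 3)^-1.
  by field; rewrite gt_eqF.
have -> : t.+1%:R^-1 = (a + 1)^-1 by rewrite /a -natr1.
have -> : a^-1 - (a + 1)^-1 = (a * (a + 1))^-1.
  by field; apply/andP; split; rewrite gt_eqF //; lra.
rewrite lef_pV2 ?posrE ?exprn_gt0 ?mulr_gt0 //; last lra.
nra.
Qed.

End Summ.
Unset Implicit Arguments. Set Strict Implicit. Set Printing Implicit Defensive.
Theorem lemma3 (R : realType) (d : measure_display) (T : measurableType d)
  (P : probability T R) (m : nat) (p : nat -> R)
  (X : nat -> T -> nat) (U V : nat -> T -> R) :
  (0 < m)%N ->
  (* discrete distribution p_1 >= p_2 >= ... on the items 0,1,2,... *)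
  (forall i, 0 <= p i) ->
  (series p @ \oo --> (1 : R)) ->
  (forall i, p i.+1 <= p i) ->
  p 0%N < m%:R^-1 ->
  (* i.i.d. stream of items with law p *)
  (forall n i, measurable [set w | X n w = i]) ->
  (forall n i, P [set w | X n w = i] = (p i)%:E) ->
  (* auxiliary uniform[0,1] randomness for tie-breaking and coins *)
  (forall n, measurable_fun setT (U n)) ->
  (forall n, measurable_fun setT (V n)) ->
  (forall n x, 0 <= x <= 1 -> P [set w | 0 <= U n w <= x] = x%:E) ->
  (forall n x, 0 <= x <= 1 -> P [set w | 0 <= V n w <= x] = x%:E) ->
  mutually_independent P (uss_family X U V) ->
  {ae P, forall w, exists t0 : nat, forall t : nat, (t0 <= t)%N ->
     let s := uss_run m (fun n => X n w) (fun n => U n w) (fun n => V n w) t in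
     0 <= (t%:R : R) / m%:R - (uss_min s)%:R <= m%:R * (ln (t%:R : R)) ^+ 2 + m%:R /\
     0 <= ((uss_max s)%:R : R) - t%:R / m%:R <= (ln (t%:R : R)) ^+ 2 + 1}.
Proof.
move=> m0 p0 ps pdec pm mX PX mU mV HU HV ind.
have M0 : (0 : R) < m%:R by rewrite ltr0n.
have p01 : p 0%N <= 1.
  apply: (le_trans (ltW pm)); rewrite invf_le1 // ler1n //.
have [z [z1 Qm]] := param_z m0 (p0 0%N) pm.
set c := ln z.
have c0 : 0 < c by apply: ln_gt0.
pose Lf (t : nat) : R := (ln (t%:R : R)) ^+ 2.
pose thr (s t : nat) : R := (t - s.+1)%:R / m%:R + Lf t.
have Q1 : 1 <= 1 - p 0%N + p 0%N * z.
  have := p0 0%N; nra.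
pose T1 := maxn 2 (Num.truncn (expR (5 / c))).+1.
pose F t := if (T1 <= t)%N then Eset X thr t else set0.
have mF t : measurable (F t).
  by rewrite /F; case: ifP => _; [exact: mE|exact: measurable0].
have T11 : (1 <= T1)%N by rewrite /T1 leq_max.
have PF t : (P (F t) <= (gterm R T1 t)%:E)%E.
  rewrite /F /gterm; case: ifP => hT; last by rewrite measure0.
  set K := expR (- (Lf t * c)).
  have K0 : 0 <= K by apply: ltW; apply: expR_gt0.
  apply: (le_trans (PE mX K0 _)).
    move=> s n' hs hn'.
    apply: (PG mX p0 ps K0) => i.
    apply: (le_trans (PA mX PX ind p0 pdec p01 (thr s t) t i (ltW z1) hn')).
    rewrite lee_fin; apply: ler_wpM2l => //.
    exact: (@K_bound R m (t - s.+1) (p 0%N) z (Lf t) m0 z1 Q1 Qm).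
  rewrite lee_fin; apply: tail_bound => //.
    by apply: leq_trans hT; rewrite leq_maxl.
  have h1 : expR (5 / c) <= (t%:R : R).
    apply: (le_trans (ltW (truncnS_gt _))).
    rewrite ler_nat; apply: leq_trans hT; exact: leq_maxr.
  rewrite -(expRK (5 / c)) ler_ln // posrE ?expR_gt0 //.
  by apply: lt_le_trans h1; apply: expR_gt0.
have sumF : (\sum_(t <oo) P (F t) < +oo)%E.
  apply: (le_lt_trans (y := 1%E)); last by apply: ltey.
  apply: (le_trans (y := (\sum_(t <oo) (gterm R T1 t)%:E)%E)).
    apply: lee_nneseries => //; by move=> i _ _; apply: measure_ge0.
  apply: lime_le.
    by apply: is_cvg_nneseries => n _ _; rewrite lee_fin gterm_ge0.
  apply: nearW => n; rewrite sumEFin lee_fin big_mkord.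
  exact: tele.
have BC := lim_sup_set_cvg0 mF sumF.
exists (lim_sup_set F); split => //.
  apply: bigcapT_measurable => n; apply: bigcup_measurable => j _; exact: mF.
move=> w /= Hw.
move=> n _.
apply: (contra_notP _ Hw) => H.
exists (maxn n T1) => t ht.
have hT : (T1 <= t)%N by apply: leq_trans ht; exact: leq_maxr.
have hn : (n <= t)%N by apply: leq_trans ht; exact: leq_maxl.
have nE : ~ Eset X thr t w.
  by move=> E; apply: H; exists t => //; rewrite /F hT.
have L0 : 0 <= Lf t by rewrite /Lf exprn_even_ge0.
apply: (det_concl (x := fun n => X n w) (fun n => U n w) (fun n => V n w) m0 L0).
move=> s n' hs hn'; rewrite leNgt; apply/negP => hc; apply: nE.
apply: (in_bigsetU (i := Ordinal hs)) => //; first exact: mem_index_enum.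
have hn's : (n' < s.+1)%N by [].
apply: (in_bigsetU (i := Ordinal hn's)) => //; first exact: mem_index_enum.
exists (X n' w) => //.
apply: (in_bigsetU (i := [ffun j : 'I_(t - s.+1) => X (j + s.+1)%N w == X n' w])).
- exact: mem_index_enum.
- rewrite /thr /=.
  rewrite (eq_bigr (fun j : 'I_(t - s.+1) => (X (j + s.+1)%N w == X n' w) : nat)); last first.
    by move=> j _; rewrite ffunE.
  by rewrite -(ltr_pM2r M0) mulrDl divfK ?gt_eqF.
- split => //; apply/in_bigsetI => j _; rewrite ffunE.
  by case: eqP => // hne; rewrite /Xeq.
Qed.
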